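(* Fix $n,m\in\mathbb N$. If $L\subseteq\mathbb R^{nm}$ is an origin-symmetric convex body and $v\in\mathbb S^{n-1}$, then $\bar S_v^*(L^\circ)\subseteq(\bar S_v L)^\circ$.
   Context: Write points of $\mathbb R^{nm}$ as $x=(x_1,\dots,x_m)$ with $x_i\in\mathbb R^n$. For $v\in\mathbb R^n$ put $x^tv=(\langle x_1,v\rangle,\dots,\langle x_m,v\rangle)\in\mathbb R^m$, and for $s=(s_1,\dots,s_m)\in\mathbb R^m$ put $vs^t=(s_1v,\dots,s_mv)\in\mathbb R^{nm}$. For a convex body $L\subseteq\mathbb R^{nm}$ the $m$th-order fiber symmetrization and its adjoint are \[\bar S_vL=\Big\{x+v\big(\tfrac{s-r}{2}\big)^t:\ x^tv=0,\ s,r\in\mathbb R^m,\ x+vs^t\in L,\ x+vr^t\in L\Big\},\] \[\bar S^*_vL=\Big\{\tfrac{x-y}{2}+vs^t:\ x^tv=y^tv=0,\ s\in\mathbb R^m,\ x+vs^t\in L,\ y+vs^t\in L\Big\}.\] $L^\circ=\{z:\langle z,w\rangle\le1\ \forall w\in L\}$ denotes the polar. *)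

(* Defs.v *)
From HB Require Import structures.
From mathcomp Require Import all_boot all_order all_algebra.
From mathcomp Require Import all_classical all_reals all_analysis.
Set Implicit Arguments. Unset Strict Implicit. Unset Printing Implicit Defensive.
Import Order.TTheory GRing.Theory Num.Theory.
Import numFieldNormedType.Exports.
Local Open Scope classical_set_scope.
Local Open Scope ring_scope.

(* A point x = (x_1,...,x_m) of R^{nm}, x_i in R^n, is an m x n matrix
   whose i-th row is x_i.  Vectors of R^n and R^m are row vectors. *)

Section FiberSym.
Variables (R : realType) (n m : nat).

Definition xtv (x : 'M[R]_(m, n)) (v : 'rV[R]_n) : 'rV[R]_m :=
  \row_(i < m) \sum_(j < n) x i j * v 0 j.

Definition vst (v : 'rV[R]_n) (s : 'rV[R]_m) : 'M[R]_(m, n) :=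
  \matrix_(i < m, j < n) (s 0 i * v 0 j).

Definition ip (z w : 'M[R]_(m, n)) : R :=
  \sum_(i < m) \sum_(j < n) z i j * w i j.

Definition polar (L : set 'M[R]_(m, n)) : set 'M[R]_(m, n) :=
  [set z | forall w, L w -> ip z w <= 1].

Definition unit_sphere (v : 'rV[R]_n) : Prop :=
  \sum_(j < n) v 0 j ^+ 2 = 1.

Definition convex_set_mx (L : set 'M[R]_(m, n)) : Prop :=
  forall x y (t : R), L x -> L y -> 0 <= t -> t <= 1 ->
    L (t *: x + (1 - t) *: y).

Definition convex_body (L : set 'M[R]_(m, n)) : Prop :=
  [/\ convex_set_mx L, compact L & (L)° !=set0 ].

Definition origin_symmetric (L : set 'M[R]_(m, n)) : Prop :=
  forall x, L x -> L (- x).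

Definition fiber_sym (v : 'rV[R]_n) (L : set 'M[R]_(m, n)) : set 'M[R]_(m, n) :=
  [set z | exists x s r, [/\ xtv x v = 0, L (x + vst v s), L (x + vst v r)
        & z = x + vst v ((2%:R)^-1 *: (s - r))]].

Definition fiber_sym_adj (v : 'rV[R]_n) (L : set 'M[R]_(m, n)) : set 'M[R]_(m, n) :=
  [set z | exists x y s, [/\ xtv x v = 0, xtv y v = 0, L (x + vst v s),
        L (y + vst v s) & z = (2%:R)^-1 *: (x - y) + vst v s]].
End FiberSym.

(* Main.v *)
Require Import Defs.
From HB Require Import structures.
From mathcomp Require Import all_boot all_order all_algebra.
From mathcomp Require Import all_classical all_reals all_analysis.
From mathcomp Require Import ring lra.
Import Order.TTheory GRing.Theory Num.Theory.
Import numFieldNormedType.Exports.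
Local Open Scope classical_set_scope.
Local Open Scope ring_scope.

Section Aux.
Variables (R : realType) (n m : nat).
Implicit Types (x y z w : 'M[R]_(m, n)) (v : 'rV[R]_n) (s t : 'rV[R]_m).

Lemma ipDl x y w : ip (x + y) w = ip x w + ip y w.
Proof.
rewrite /ip -big_split; apply: eq_bigr => i _; rewrite -big_split.
by apply: eq_bigr => j _; rewrite mxE mulrDl.
Qed.

Lemma ipDr x y w : ip w (x + y) = ip w x + ip w y.
Proof.
rewrite /ip -big_split; apply: eq_bigr => i _; rewrite -big_split.
by apply: eq_bigr => j _; rewrite mxE mulrDr.
Qed.

Lemma ipZl (k : R) x w : ip (k *: x) w = k * ip x w.
Proof.
rewrite /ip mulr_sumr; apply: eq_bigr => i _; rewrite mulr_sumr.
by apply: eq_bigr => j _; rewrite mxE mulrA.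
Qed.

Lemma ipNl x w : ip (- x) w = - ip x w.
Proof.
rewrite /ip -sumrN; apply: eq_bigr => i _; rewrite -sumrN.
by apply: eq_bigr => j _; rewrite mxE mulNr.
Qed.

Lemma ipNr x w : ip w (- x) = - ip w x.
Proof.
rewrite /ip -sumrN; apply: eq_bigr => i _; rewrite -sumrN.
by apply: eq_bigr => j _; rewrite mxE mulrN.
Qed.

Lemma ipC x w : ip x w = ip w x.
Proof. by rewrite /ip; apply: eq_bigr => i _; apply: eq_bigr => j _; rewrite mulrC. Qed.

Lemma ip_vst x v t : xtv x v = 0 -> ip x (vst v t) = 0.
Proof.
move=> h; rewrite /ip.
transitivity (\sum_(i < m) t 0 i * xtv x v 0 i).
  apply: eq_bigr => i _; rewrite mxE mulr_sumr; apply: eq_bigr => j _.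
  by rewrite mxE; ring.
by rewrite h big1 // => i _; rewrite mxE mulr0.
Qed.

Lemma ip_vst_vst v s t : unit_sphere v ->
  ip (vst v s) (vst v t) = \sum_(i < m) s 0 i * t 0 i.
Proof.
move=> hv; rewrite /ip; apply: eq_bigr => i _.
transitivity (s 0 i * t 0 i * \sum_(j < n) v 0 j ^+ 2).
  rewrite mulr_sumr; apply: eq_bigr => j _; rewrite !mxE; ring.
by rewrite hv mulr1.
Qed.

End Aux.

Theorem proposition4p6 (R : realType) (n m : nat) (L : set 'M[R]_(m, n))
  (v : 'rV[R]_n) :
  convex_body L -> origin_symmetric L -> unit_sphere v ->
  fiber_sym_adj v (polar L) `<=` polar (fiber_sym v L).
Proof.
move=> _ hsym hv z [x' [y' [s [hx' hy' hA hB ->]]]] w [x [a [b [hx ha hb ->]]]].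
have HA := hA _ ha.
have HB := hB _ (hsym _ hb).
rewrite !ipDl !ipDr in HA.
rewrite ipNr !ipDl !ipDr in HB.
rewrite !ipDl !ipDr !ipZl !ipDl !ipNl.
have E1 := fun t => @ip_vst R n m x' v t hx'.
have E2 := fun t => @ip_vst R n m y' v t hy'.
have E3 := fun t => @ip_vst R n m x v t hx.
rewrite !E1 !E2 !(@ipC R n m (vst v s) x) !E3 !ip_vst_vst // in HA HB *.
have -> : \sum_(i < m) s 0 i * (2%:R^-1 *: (a - b)) 0 i =
  2%:R^-1 * (\sum_(i < m) s 0 i * a 0 i) - 2%:R^-1 * (\sum_(i < m) s 0 i * b 0 i).
  rewrite !mulr_sumr -sumrB; apply: eq_bigr => i _; rewrite !mxE; ring.
move: HA HB; set p := ip x' x; set q := ip y' x.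
set A := \sum_(i < m) _ * a 0 i; set B := \sum_(i < m) _ * b 0 i.
move: p q A B => p q A B HA HB.
rewrite ?addr0 ?add0r ?subr0 in HA HB *.
have h2 : (2%:R^-1 : R) = 1/2 by rewrite div1r.
rewrite h2; lra.
Qed.
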